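(* Let $p>1$ and $h\in C[0,\infty)$ with $h(s)>0$ for $s>0$, and assume \[ \lim_{t\to\infty} t^{-(p+1)/2}\int_0^t s^{p+1}h(s)\,ds=\infty. \] For $c>0$ define \[ E(c)=\inf_{w\in H^1_0(0,c),\,w\not\equiv0}\frac{\int_0^c|w'(s)|^2ds}{\left(\int_0^c h(s)|w(s)|^{p+1}ds\right)^{2/(p+1)}}. \] Then $E(c)\to0$ as $c\to\infty$. *)

(* Defs.v *)
From HB Require Import structures.
From mathcomp Require Import all_boot all_order all_algebra.
From mathcomp Require Import all_classical all_reals all_analysis.
Set Implicit Arguments. Unset Strict Implicit. Unset Printing Implicit Defensive.
Import Order.TTheory GRing.Theory Num.Theory.
Import numFieldNormedType.Exports.
Local Open Scope classical_set_scope.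
Local Open Scope ring_scope.

(* Elements of H^1_0(0,c) are represented through their (weak) derivative g:
   w(x) = \int_0^x g, with g in L^2(0,c) and \int_0^c g = 0 (so w(0)=w(c)=0). *)
Definition H10_prim (R : realType) (g : R -> R) (x : R) : R :=
  Rintegral (@lebesgue_measure R) `[0, x] g.

Definition is_H10_deriv (R : realType) (c : R) (g : R -> R) : Prop :=
  measurable_fun `[0, c] g /\
  (@lebesgue_measure R).-integrable `[0, c] (EFin \o g) /\
  (\int[@lebesgue_measure R]_(x in `[0%R, c]%classic) ((g x) ^+ 2)%:E < +oo)%E /\
  Rintegral (@lebesgue_measure R) `[0, c] g = 0.

Definition rayleigh (R : realType) (p : R) (h : R -> R) (c : R) (g : R -> R) : R :=
  Rintegral (@lebesgue_measure R) `[0, c] (fun s => (g s) ^+ 2) /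
  (Rintegral (@lebesgue_measure R) `[0, c]
     (fun s => h s * `|H10_prim g s| `^ (p + 1))) `^ (2 / (p + 1)).

Definition E_inf (R : realType) (p : R) (h : R -> R) (c : R) : R :=
  inf [set q : R | exists g : R -> R,
         [/\ is_H10_deriv c g,
             (exists x : R, 0 <= x <= c /\ H10_prim g x != 0)
           & q = rayleigh p h c g]].

(* Main.v *)
Require Import Defs.
From HB Require Import structures.
From mathcomp Require Import all_boot all_order all_algebra.
From mathcomp Require Import all_classical all_reals all_analysis.
From mathcomp Require Import measurable_realfun.
From mathcomp Require Import ring lra.
Import Order.TTheory GRing.Theory Num.Theory.
Import numFieldNormedType.Exports.
Local Open Scope classical_set_scope.
Local Open Scope ring_scope.

Section helpers.
Variable R : realType.
Notation mu := (@lebesgue_measure R).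

Lemma Rint_cc_cst (a b r : R) : a <= b ->
  Rintegral mu `[a, b] (fun _ => r) = r * (b - a).
Proof.
move=> ab; rewrite Rintegral_cst //= lebesgue_measure_itv /= lte_fin.
have [ab'|ba] := ltrP a b; first by rewrite -EFinD.
have -> : a = b by apply/le_anti; rewrite ab ba.
by rewrite subrr mulr0.
Qed.

Lemma Rint_oc_cst (a b r : R) : a <= b ->
  Rintegral mu `]a, b] (fun _ => r) = r * (b - a).
Proof.
move=> ab; rewrite Rintegral_cst //= lebesgue_measure_itv /= lte_fin.
have [ab'|ba] := ltrP a b; first by rewrite -EFinD.
have -> : a = b by apply/le_anti; rewrite ab ba.
by rewrite subrr mulr0.
Qed.

Definition gc (c : R) (s : R) : R := if s <= c / 2 then 1 else -1.
Definition Wc (c : R) (s : R) : R := c / 2 - `|s - c / 2|.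

Lemma gc_meas c : measurable_fun setT (gc c).
Proof.
apply: measurable_fun_ifT; last 2 first.
- exact: measurable_cst.
- exact: measurable_cst.
by apply: measurable_fun_ler => //; exact: measurable_cst.
Qed.

Lemma gc_int c a b : mu.-integrable `[a, b] (EFin \o gc c).
Proof.
apply: measurable_bounded_integrable => //.
- have := lebesgue_measure_itv `[a, b]; rewrite /= => ->; case: ifP => _; rewrite ?ltry //.
- by apply: (@measurable_funS _ _ _ _ setT) => //; exact: gc_meas.
- rewrite /bounded_near; near=> M; rewrite /globally /= => s _; rewrite /gc; case: ifP => _; rewrite ?normrN normr1;
  near: M; exact: nbhs_pinfty_ge.
Unshelve. all: by end_near.
Qed.


Lemma prim_le c x : 0 <= x <= c / 2 -> H10_prim (gc c) x = x.
Proof.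
move=> /andP[x0 hx].
rewrite /H10_prim (@eq_Rintegral _ _ _ _ _ (fun _ => 1)); last first.
  move=> s; rewrite inE /= in_itv /= => /andP[_ sx].
  by rewrite /gc (le_trans sx hx).
by rewrite Rint_cc_cst // mul1r subr0.
Qed.

Lemma primW c x : 0 < c -> 0 <= x <= c -> H10_prim (gc c) x = Wc c x.
Proof.
move=> c0 /andP[x0 xc].
have [hx|hx] := lerP x (c / 2).
  rewrite prim_le ?x0 // /Wc ler0_norm ?subr_le0 //; lra.
have := @Rintegral_itvB R (gc c) (BLeft 0) (BRight x) (c / 2) (gc_int c 0 x).
rewrite !bnd_simp => /(_ _ (ltW hx)).
have c20 : 0 <= c / 2 by lra.
move=> /(_ c20).
rewrite -/(H10_prim (gc c) x) -/(H10_prim (gc c) (c / 2)) (@prim_le c (c / 2)) ?c20 ?lexx //.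
rewrite (@eq_Rintegral _ _ _ _ _ (fun _ => -1)); last first.
  move=> s; rewrite inE /= in_itv /= => /andP[sx _].
  by rewrite /gc leNgt sx.
rewrite Rint_oc_cst ?(ltW hx) // => E.
have HH : H10_prim (gc c) x = c / 2 + (-1 * (x - c / 2)) by rewrite -E addrC subrK.
rewrite HH /Wc gtr0_norm ?subr_gt0 //; lra.
Qed.

Lemma gc_sq c s : (gc c s) ^+ 2 = 1.
Proof. by rewrite /gc; case: ifP => _; rewrite ?sqrrN expr1n. Qed.

Lemma gc_H10 c : 0 < c -> is_H10_deriv c (gc c).
Proof.
move=> c0; split; [|split; [|split]].
- by apply: (@measurable_funS _ _ _ _ setT) => //; exact: gc_meas.
- exact: gc_int.
- under eq_integral do rewrite gc_sq.
  have := @integral_cst _ _ _ mu `[0, c] _ 1%:E.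
  rewrite /cst /= => -> //.
  have := lebesgue_measure_itv `[0, c]; rewrite /= => ->.
  by case: ifP => _; rewrite ?mul1e ?ltry.
- have := @primW c c c0; rewrite /H10_prim => ->; last by rewrite lexx ltW.
  by rewrite /Wc ger0_norm; lra.
Qed.

Lemma gc_nz c : 0 < c -> H10_prim (gc c) (c / 2) != 0.
Proof. by move=> c0; rewrite prim_le; [lra|apply/andP; split; lra]. Qed.

Lemma gc_num c : 0 < c -> Rintegral mu `[0, c] (fun s => (gc c s) ^+ 2) = c.
Proof.
move=> c0; under eq_Rintegral do rewrite gc_sq.
by rewrite Rint_cc_cst ?(ltW c0) // mul1r subr0.
Qed.

Lemma powR_bound (t A I b : R) : 0 < t -> 0 < b -> 0 < A ->
  A <= t `^ (- b) * I -> A `^ (b^-1) * t <= I `^ (b^-1).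
Proof.
move=> t0 b0 A0; rewrite powRN mulrC ler_pdivlMr ?powR_gt0 // => H.
have I0 : 0 <= I by apply: le_trans H; rewrite mulr_ge0 ?powR_ge0 // ltW.
have := @ge0_ler_powR R (b^-1) _ (A * t `^ b) I _ _ H.
rewrite powRM ?(ltW A0) ?powR_ge0 // -powRrM mulfV ?gt_eqF // powRr1 ?(ltW t0) //.
apply; rewrite ?invr_ge0 ?(ltW b0) // nnegrE //.
by rewrite mulr_ge0 ?powR_ge0 // ltW.
Qed.


Lemma Wc_ge0 c s : 0 <= s <= c -> 0 <= Wc c s.
Proof. by move=> /andP[s0 sc]; rewrite /Wc subr_ge0 ler_norml; apply/andP; split; lra. Qed.

Lemma Wc_le c s : 0 <= s <= c -> Wc c s <= c.
Proof. by move=> /andP[s0 sc]; rewrite /Wc; have := normr_ge0 (s - c / 2); lra. Qed.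

Lemma Wc_meas c : measurable_fun setT (Wc c).
Proof.
apply: measurable_funB; first exact: measurable_cst.
apply: measurableT_comp => //.
by apply: measurable_funB => //; exact: measurable_cst.
Qed.

Lemma h_meas (h : R -> R) (c : R) : {within `[0, +oo[, continuous h} ->
  measurable_fun `[0, c] h.
Proof.
move=> hc; apply: subspace_continuous_measurable_fun => //.
apply: continuous_subspaceW hc.
by move=> s; rewrite /= !in_itv /= => /andP[-> _].
Qed.

Lemma F_int (h : R -> R) (p c : R) : 0 <= p + 1 -> {within `[0, +oo[, continuous h} ->
  mu.-integrable `[0, c] (EFin \o (fun s => h s * (Wc c s) `^ (p + 1))).
Proof.
move=> p0 hc; apply: measurable_bounded_integrable => //.
- by have := lebesgue_measure_itv `[0, c]; rewrite /= => ->; case: ifP => _; rewrite ?ltry.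
- apply: measurable_funM; first exact: h_meas.
  apply: (@measurable_funS _ _ _ _ setT) => //.
  have := measurableT_comp (@measurable_powR R (p + 1)) (Wc_meas c); exact.
- have hc' : {within `[0, c], continuous h}.
    apply: continuous_subspaceW hc.
    by move=> s; rewrite /= !in_itv /= => /andP[-> _].
  have := continuous_compact hc' (@segment_compact R 0 c).
  move=> /(@compact_bounded R R^o) [M0 [_ HM]].
  rewrite /bounded_near; near=> M; rewrite /globally /= => s hs.
  have hs' : 0 <= s <= c by move: hs; rewrite /= in_itv.
  have HMs : `|h s| <= `|M0| + 1.
    by apply: HM; [rewrite ltr_pwDr // ler_norm | exists s].
  rewrite normrM (ger0_norm (powR_ge0 _ _)).
  apply: (@le_trans _ _ ((`|M0| + 1) * c `^ (p + 1))).
    apply: ler_pM => //; rewrite ?powR_ge0 //.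
    apply: ge0_ler_powR => //; rewrite ?nnegrE ?Wc_ge0 ?Wc_le //.
    by case/andP: hs' => s0 sc; apply: le_trans sc.
  near: M; exact: nbhs_pinfty_ge.
Unshelve. all: by end_near.
Qed.

Lemma Wc_low c s : s <= c / 2 -> Wc c s = s.
Proof. by move=> hs; rewrite /Wc ler0_norm ?subr_le0 //; lra. Qed.

Lemma den_ge (h : R -> R) (p c : R) : 0 < c -> 0 <= p + 1 ->
  {within `[0, +oo[, continuous h} -> (forall s, 0 < s -> 0 < h s) ->
  Rintegral mu `[0, c / 2] (fun s => s `^ (p + 1) * h s) <=
  Rintegral mu `[0, c] (fun s => h s * `|H10_prim (gc c) s| `^ (p + 1)).
Proof.
move=> c0 p0 hc hp.
have -> : Rintegral mu `[0, c] (fun s => h s * `|H10_prim (gc c) s| `^ (p + 1)) =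
          Rintegral mu `[0, c] (fun s => h s * Wc c s `^ (p + 1)).
  apply: eq_Rintegral => s; rewrite inE /= in_itv /= => hs.
  by rewrite primW // ger0_norm ?Wc_ge0.
have := @Rintegral_itvB R (fun s => h s * Wc c s `^ (p + 1)) (BLeft 0) (BRight c) (c / 2) (F_int h p c p0 hc).
rewrite !bnd_simp => /(_ _ _).
have c20 : 0 <= c / 2 by lra.
have c2c : c / 2 <= c by lra.
move=> /(_ c20 c2c) E.
have E2 : Rintegral mu `[0, c / 2] (fun s => h s * Wc c s `^ (p + 1)) =
          Rintegral mu `[0, c / 2] (fun s => s `^ (p + 1) * h s).
  apply: eq_Rintegral => s; rewrite inE /= in_itv /= => /andP[_ hs].
  by rewrite Wc_low // mulrC.
have G : 0 <= Rintegral mu `]c / 2, c] (fun s => h s * Wc c s `^ (p + 1)).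
  apply: Rintegral_ge0 => s; rewrite /= in_itv /= => /andP[hs _].
  have s0 : 0 < s := le_lt_trans c20 hs.
  by rewrite mulr_ge0 ?powR_ge0 // ltW // hp.
by rewrite E2 in E; rewrite -subr_ge0 E.
Qed.

End helpers.
Arguments gc {R}.
Arguments Wc {R}.

Theorem lemma2p3 (R : realType) (p : R) (h : R -> R)
  (hp : 1 < p)
  (hcont : {within `[0, +oo[, continuous h})
  (hpos : forall s : R, 0 < s -> 0 < h s)
  (hlim : (fun t : R => t `^ (- ((p + 1) / 2)) *
             Rintegral (@lebesgue_measure R) `[0, t]
               (fun s => s `^ (p + 1) * h s)) @ +oo --> +oo) :
  E_inf p h @ +oo --> (0 : R).
Proof.
pose I t := Rintegral (@lebesgue_measure R) `[0, t] (fun s => s `^ (p + 1) * h s).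
pose B c := c / (I (c / 2)) `^ (2 / (p + 1)).
have p1 : 0 < p + 1 by lra.
have b0 : 0 < (p + 1) / 2 by lra.
have binv : ((p + 1) / 2)^-1 = 2 / (p + 1) by rewrite invf_div.
have Bpos : \forall c \near +oo, 0 < c /\ 0 < I (c / 2).
  have H := near_pinfty_div2 ((cvgryPge _).1 hlim 1).
  near=> c.
  have c0 : 0 < c by near: c; apply: nbhs_pinfty_gt; rewrite num_real.
  split => //.
  have H1 : 1 <= (c / 2) `^ (- ((p + 1) / 2)) * I (c / 2).
    by near: c; apply: H.
  have H2 := lt_le_trans ltr01 H1.
  by move: H2; rewrite pmulr_rgt0 // powR_gt0 // divr_gt0.
have Bcvg : B @ +oo --> 0.
  apply/cvgrPdist_lt => e e0.
  pose A := (4 / e) `^ ((p + 1) / 2).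
  have A0 : 0 < A by rewrite powR_gt0 // divr_gt0.
  have H := near_pinfty_div2 ((cvgryPge _).1 hlim A).
  near=> c.
  have [c0 I0] : 0 < c /\ 0 < I (c / 2) by near: c; apply: Bpos.
  have H1 : A <= (c / 2) `^ (- ((p + 1) / 2)) * I (c / 2) by near: c; apply: H.
  have c20 : 0 < c / 2 by rewrite divr_gt0.
  have HI := @powR_bound R _ _ _ _ c20 b0 A0 H1.
  have e4 : 0 <= 4 / e by rewrite divr_ge0 // ltW.
  rewrite /A -powRrM mulfV ?gt_eqF // powRr1 // binv in HI.
  have Ia0 : 0 < I (c / 2) `^ (2 / (p + 1)) by rewrite powR_gt0.
  rewrite sub0r normrN ger0_norm ?divr_ge0 ?ltW // /B ltr_pdivrMr //.
  apply: lt_le_trans (ler_wpM2l (ltW e0) HI).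
  have -> : e * (4 / e * (c / 2)) = 2 * c by field; rewrite gt_eqF.
  lra.
apply: (@squeeze_cvgr _ _ _ _ (fun=> 0) B); last exact: Bcvg; last exact: cvg_cst.
near=> c.
have [c0 I0] : 0 < c /\ 0 < I (c / 2) by near: c; apply: Bpos.
rewrite /E_inf.
set S := [set q : R | _].
have mem : S (rayleigh p h c (gc c)).
  exists (gc c); split => //; first exact: gc_H10.
  exists (c / 2); split; last exact: gc_nz.
  by apply/andP; split; lra.
have lb : lbound S 0.
  move=> q [g [_ _ ->]]; rewrite /rayleigh divr_ge0 ?powR_ge0 //.
  by apply: Rintegral_ge0 => s _; rewrite sqr_ge0.
apply/andP; split.
  by apply: lb_le_inf => //; exists (rayleigh p h c (gc c)).
apply: le_trans (ge_inf _ mem) _; first by exists 0.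
have Dge := @den_ge R h p c c0 (ltW p1) hcont hpos.
have D0 : 0 < Rintegral (@lebesgue_measure R) `[0, c] (fun s => h s * `|H10_prim (gc c) s| `^ (p + 1)).
  exact: lt_le_trans I0 Dge.
rewrite /rayleigh gc_num // /B ler_wpM2l ?(ltW c0) // lef_pV2 ?posrE ?powR_gt0 //.
apply: ge0_ler_powR => //; rewrite ?nnegrE ?ltW //.
by rewrite divr_gt0.
Unshelve. all: by end_near.
Qed.
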